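(* Let $\mathcal P$ be a Datalog program with negation, viewed as a program over Belnap's bilattice $\mathcal{FOUR}$ whose rules have the form $A\leftarrow (L_{1,1}\wedge\dots\wedge L_{1,n_1})\vee\dots\vee(L_{k,1}\wedge\dots\wedge L_{k,n_k})$ with the $L_{p,q}$ ground literals. (1) If $H_{\mathcal F}$ is the everywhere false hypothesis ($H_{\mathcal F}(A)=\mathcal F$ for all $A$), then $sem^{H_{\mathcal F}}_{\mathcal P}$ coincides with the well-founded semantics of $\mathcal P$. (2) If $H_{\mathcal U}$ is the everywhere underdefined hypothesis ($H_{\mathcal U}(A)=\mathcal U$ for all $A$), then $sem^{H_{\mathcal U}}_{\mathcal P}$ coincides with the Kripke–Kleene semantics of $\mathcal P$.
   Context: $\mathcal{FOUR}=\{\mathcal F,\mathcal T,\mathcal U,\mathcal O\}$ with knowledge order $\mathcal U\le_k\mathcal F,\mathcal T\le_k\mathcal O$ and truth order $\mathcal F\le_t\mathcal U,\mathcal O\le_t\mathcal T$; $\wedge,\vee$ are meet/join for $\le_t$, $\otimes,\oplus$ meet/join for $\le_k$; $\neg\mathcal T=\mathcal F$, $\neg\mathcal F=\mathcal T$, $\neg\mathcal U=\mathcal U$, $\neg\mathcal O=\mathcal O$. A program $\mathcal P=\langle F,R\rangle$ consists of a function $F:\mathcal{HB}_{\mathcal P}\to\mathcal{FOUR}$ (the facts) and a finite set $R$ of ground clauses $A\leftarrow B$, each ground atom the head of at most one clause; $Head$ is the set of heads. An interpretation is a function $\mathcal{HB}_{\mathcal P}\to\mathcal{FOUR}$, extended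 to formulas by $I(\neg A)=\neg I(A)$, $I(X\wedge Y)=I(X)\wedge I(Y)$, $I(X\vee Y)=I(X)\vee I(Y)$. Operations on interpretations are pointwise. $I,J$ are compatible if $I(A)\neq\mathcal U\neq J(A)$ implies $I(A)=J(A)$; $I\le J$ means $I(A)\neq\mathcal U\Rightarrow I(A)=J(A)$ for all $A$. $B\equiv_I\alpha$ means $J(B)=\alpha$ for all $J$ with $I\le J$. $T_R(I)(A)=\alpha$ if there is a clause $A\leftarrow B$ in $R$ with $B\equiv_I\alpha$, and $\mathcal U$ otherwise. For a program $\mathcal Q=\langle G,R\rangle$ and hypothesis $H$, $H'$ is sound w.r.t. $\mathcal Q$ if $G,H'$ are compatible and $H'_{/Head}\le T_R(G\oplus H')$ (where $I_{/S}$ is $I$ on $S$ and $\mathcal U$ elsewhere); the support $s^H_{\mathcal Q}$ is the maximal (w.r.t. $\le$) sound $H'\le H$. The $H$-founded semantics $sem^H_{\mathcal P}$ is the limit of the $\le$-increasing sequence $F_0=F$, $F_{n+1}=T_R(F_n)\oplus s^H_{\langle F_n,R\rangle}$. Interpretations with values in $\{\mathcal F,\mathcal T,\mathcal U\}$ are identified with partial interpretations (consistent sets of ground literals) via $I\mapsto\{A\mid I(A)=\mathcal T\}\cup\{\neg A\mid I(A)=\mathcal F\}$. Well-founded semantics (Van Gelder–Ross–Schlipf): for a partial interpretation $I$, $T_P(I)$ is the set of heads of rules all of whose body literals are in $I$; a set $U$ of ground atoms is unfounded w.r.t. $I$ if for every $A\in U$ and every rule with head $A$, some body literal $B$ has $\neg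 B\in I$ or $B\in U$; $U_P(I)$ is the greatest unfounded set; the well-founded semantics is the least fixpoint of $W_P(I)=T_P(I)\cup\neg U_P(I)$. Kripke–Kleene semantics (Fitting): $\Phi_{\mathcal P}(v)(A)=\mathcal T$ if there is a rule with head $A$ whose body is true under $v$; $=\mathcal F$ if there is a rule with head $A$ and all rules with head $A$ have body false under $v$; $=\mathcal U$ otherwise (three-valued Kleene evaluation); the Kripke–Kleene semantics is the fixpoint of $\Phi_{\mathcal P}$ obtained by iterating from the everywhere-$\mathcal U$ valuation (its $\le_k$-least fixpoint). *)

(* Defs.v *)
From mathcomp Require Import all_boot.
Set Implicit Arguments. Unset Strict Implicit. Unset Printing Implicit Defensive.

(* Belnap's bilattice FOUR, in Ginsberg's pair encoding:                    *)
(*   x = (evidence for truth, evidence for falsity).                        *)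
(* Knowledge order: componentwise implication; truth order: first component *)
(* increasing, second decreasing.                                           *)
Definition four := (bool * bool)%type.
Definition F4 : four := (false, true).
Definition T4 : four := (true, false).
Definition U4 : four := (false, false).
Definition O4 : four := (true, true).

Definition and4 (x y : four) : four := (x.1 && y.1, x.2 || y.2).
Definition or4 (x y : four) : four := (x.1 || y.1, x.2 && y.2).
Definition oplus4 (x y : four) : four := (x.1 || y.1, x.2 || y.2).
Definition neg4 (x : four) : four := (x.2, x.1).
Definition lek4 (x y : four) : bool := (x.1 ==> y.1) && (x.2 ==> y.2).

(* Interpretations over a finite Herbrand base A (ground Datalog).          *)
Definition interp (A : finType) := {ffun A -> four}.

(* ground literals: (a, true) is the atom a, (a, false) is  not a *)
Definition lit (A : finType) := (A * bool)%type.

(* a clause body in disjunctive normal form: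
   (L11 /\ ... /\ L1n1) \/ ... \/ (Lk1 /\ ... /\ Lknk) *)
Definition body (A : finType) := seq (seq (lit A)).

Definition lit_val {A : finType} (I : interp A) (l : lit A) : four :=
  if l.2 then I l.1 else neg4 (I l.1).
Definition eval_conj {A : finType} (I : interp A) (c : seq (lit A)) : four :=
  foldr (fun l acc => and4 (lit_val I l) acc) T4 c.
Definition eval_body {A : finType} (I : interp A) (b : body A) : four :=
  foldr (fun c acc => or4 (eval_conj I c) acc) F4 b.

Definition const_interp {A : finType} (x : four) : interp A := [ffun _ => x].
Definition oplusI {A : finType} (I J : interp A) : interp A :=
  [ffun a => oplus4 (I a) (J a)].

Definition compatible {A : finType} (I J : interp A) : bool :=
  [forall a, (I a != U4) ==> (J a != U4) ==> (I a == J a)].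
Definition leI {A : finType} (I J : interp A) : bool :=
  [forall a, (I a != U4) ==> (I a == J a)].

Definition equiv_to {A : finType} (I : interp A) (b : body A) (alpha : four) : bool :=
  [forall J : interp A, leI I J ==> (eval_body J b == alpha)].

(* A program over FOUR: facts F and rules R, each atom being the head of at
   most one clause, represented as a partial map from atoms to bodies. *)
Record prog4 (A : finType) := Prog4 { facts : interp A; rules : A -> option (body A) }.

(* T_R(I)(a) = alpha if the clause a <- B has B ==_I alpha, U otherwise
   (alpha is unique when it exists). *)
Definition TR {A : finType} (R : A -> option (body A)) (I : interp A) : interp A :=
  [ffun a => if R a is Some b then
               if equiv_to I b T4 then T4
               else if equiv_to I b F4 then F4
               else if equiv_to I b O4 then O4
               else U4
             else U4].

Definition is_head {A : finType} (R : A -> option (body A)) (a : A) : bool :=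
  if R a is Some _ then true else false.

Definition restrict_head {A : finType} (R : A -> option (body A)) (I : interp A) : interp A :=
  [ffun a => if is_head R a then I a else U4].

Definition sound {A : finType} (G : interp A) (R : A -> option (body A)) (H' : interp A) : bool :=
  compatible G H' && leI (restrict_head R H') (TR R (oplusI G H')).

Definition is_support {A : finType} (G : interp A) (R : A -> option (body A))
    (H S : interp A) : Prop :=
  [/\ sound G R S, leI S H &
      forall S', sound G R S' -> leI S' H -> leI S' S].

Definition H_sequence {A : finType} (P : prog4 A) (H : interp A) (f : nat -> interp A) : Prop :=
  f 0 = facts P /\
  forall n, exists s, is_support (f n) (rules P) H s /\
                      f n.+1 = oplusI (TR (rules P) (f n)) s.

Definition Hfounded_sem {A : finType} (P : prog4 A) (H M : interp A) : Prop :=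
  exists f, H_sequence P H f /\ exists n, forall m, n <= m -> f m = M.

(* Ground Datalog programs with negation: lists of rules (head, body),     *)
(* the body being a list (conjunction) of literals; facts are rules with   *)
(* empty body.                                                              *)
Definition dprog (A : finType) := seq (A * seq (lit A)).

Definition bodies_of {A : finType} (P : dprog A) (a : A) : body A :=
  [seq r.2 | r <- P & r.1 == a].

Definition to_four {A : finType} (P : dprog A) : prog4 A :=
  Prog4 (const_interp U4)
        (fun a => if bodies_of P a is [::] then None else Some (bodies_of P a)).

(* Well-founded semantics (Van Gelder - Ross - Schlipf) *)
Definition TP {A : finType} (P : dprog A) (I : {set lit A}) : {set A} :=
  [set a | has (fun r => (r.1 == a) && all (fun l => l \in I) r.2) P].

Definition unfounded {A : finType} (P : dprog A) (I : {set lit A}) (U : {set A}) : bool :=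
  [forall a in U, all (fun r => (r.1 != a) ||
        has (fun l => ((l.1, ~~ l.2) \in I) || (l.2 && (l.1 \in U))) r.2) P].

Definition UP {A : finType} (P : dprog A) (I : {set lit A}) : {set A} :=
  \bigcup_(U | unfounded P I U) U.

Definition WP {A : finType} (P : dprog A) (I : {set lit A}) : {set lit A} :=
  [set l : lit A | if l.2 then l.1 \in TP P I else l.1 \in UP P I].

Definition is_wfs {A : finType} (P : dprog A) (I : {set lit A}) : Prop :=
  WP P I = I /\ forall J, WP P J = J -> I \subset J.

Definition three_valued {A : finType} (M : interp A) : bool := [forall a, M a != O4].
Definition lits_of {A : finType} (M : interp A) : {set lit A} :=
  [set l : lit A | M l.1 == (if l.2 then T4 else F4)].

(* Kripke - Kleene semantics (Fitting); on three-valued interpretations the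
   FOUR connectives are Kleene's strong three-valued connectives. *)
Definition Phi {A : finType} (P : dprog A) (v : interp A) : interp A :=
  [ffun a => let bs := bodies_of P a in
             if has (fun c => eval_conj v c == T4) bs then T4
             else if (bs != [::]) && all (fun c => eval_conj v c == F4) bs then F4
             else U4].

Definition leKI {A : finType} (I J : interp A) : bool := [forall a, lek4 (I a) (J a)].

Definition is_kk {A : finType} (P : dprog A) (M : interp A) : Prop :=
  [/\ three_valued M, Phi P M = M &
      forall N, three_valued N -> Phi P N = N -> leKI M N].

(* Main.v *)
Require Import Defs.
From mathcomp Require Import all_boot.
Set Implicit Arguments. Unset Strict Implicit. Unset Printing Implicit Defensive.

Definition compat4 (x y : four) := (x != U4) ==> (y != U4) ==> (x == y).
Definition le4 (x y : four) := (x != U4) ==> (x == y).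

Lemma oplus_mono4 x x' y y' :
  [&& le4 x x', le4 y y' & compat4 x' y'] ==> le4 (oplus4 x y) (oplus4 x' y').
Proof. by case: x => [[] []]; case: x' => [[] []]; case: y => [[] []]; case: y' => [[] []]. Qed.

Section Gen.
Variable A : finType.
Implicit Types I J G X Y S : interp A.

Lemma leI_refl I : leI I I.
Proof. by apply/forallP => a; rewrite eqxx implybT. Qed.

Lemma leI_trans I J K : leI I J -> leI J K -> leI I K.
Proof.
move=> /forallP h1 /forallP h2; apply/forallP => a; apply/implyP => Ha.
have /eqP E := implyP (h1 a) Ha; rewrite E; apply: (implyP (h2 a)); by rewrite -E.
Qed.

Lemma leI_anti I J : leI I J -> leI J I -> I = J.
Proof.
move=> /forallP h1 /forallP h2; apply/ffunP => a.
case: (boolP (I a != U4)) => Ha; first exact/eqP/(implyP (h1 a)).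
case: (boolP (J a != U4)) => Hb; first exact/esym/eqP/(implyP (h2 a)).
by move: Ha Hb; rewrite !negbK => /eqP -> /eqP ->.
Qed.

Lemma leIE I J a : leI I J -> I a != U4 -> I a = J a.
Proof. by move=> /forallP h Ha; apply/eqP/(implyP (h a)). Qed.

Lemma compatE I J a : compatible I J -> I a != U4 -> J a != U4 -> I a = J a.
Proof. by move=> /forallP h Ha Hb; apply/eqP; move: (h a); rewrite Ha Hb. Qed.

Lemma oplus_mono X X' Y Y' : leI X X' -> leI Y Y' -> compatible X' Y' ->
  leI (oplusI X Y) (oplusI X' Y').
Proof.
move=> /forallP h1 /forallP h2 /forallP h3; apply/forallP => a; rewrite !ffunE.
exact: (implyP (oplus_mono4 (X a) (X' a) (Y a) (Y' a))) (introT and3P (And3 (h1 a) (h2 a) (h3 a))).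
Qed.

Lemma leI_oplus G S : compatible G S -> leI G (oplusI G S).
Proof.
move=> /forallP h; apply/forallP => a; rewrite ffunE; move: (h a).
by case: (G a) => [[] []]; case: (S a) => [[] []].
Qed.

End Gen.
Section Ev.
Variable A : finType.
Implicit Types I J G X Y S : interp A.

Lemma eval_conj1 I c : (eval_conj I c).1 = all (fun l => (lit_val I l).1) c.
Proof. by elim: c => //= l c <-. Qed.
Lemma eval_conj2 I c : (eval_conj I c).2 = has (fun l => (lit_val I l).2) c.
Proof. by elim: c => //= l c <-. Qed.
Lemma eval_body1 I b : (eval_body I b).1 = has (fun c => (eval_conj I c).1) b.
Proof. by elim: b => //= c b <-. Qed.
Lemma eval_body2 I b : (eval_body I b).2 = all (fun c => (eval_conj I c).2) b.
Proof. by elim: b => //= c b <-. Qed.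

Lemma lit_val_le I J l : leI I J -> I l.1 != U4 -> lit_val J l = lit_val I l.
Proof. by move=> /forallP h Ha; rewrite /lit_val (eqP (implyP (h l.1) Ha)). Qed.

Lemma lit_val_nU I l : (lit_val I l != U4) = (I l.1 != U4).
Proof. by rewrite /lit_val; case: l.2 => //; case: (I l.1) => [[] []]. Qed.

Definition Oext I : interp A := [ffun a => if I a == U4 then O4 else I a].
Lemma Oext_le I : leI I (Oext I).
Proof. by apply/forallP => a; rewrite ffunE; case: (I a) => [[] []]. Qed.
Lemma lit_val_Oext I l : lit_val (Oext I) l = if lit_val I l == U4 then O4 else lit_val I l.
Proof. by rewrite /lit_val ffunE; case: l.2 => //; case: (I l.1) => [[] []]. Qed.

Lemma equiv_toP I b x : reflect (forall J, leI I J -> eval_body J b = x) (equiv_to I b x).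
Proof.
apply: (iffP forallP) => h J; first by move=> HJ; apply/eqP/(implyP (h J)).
by apply/implyP => HJ; apply/eqP/h.
Qed.

Lemma equiv_T I b :
  equiv_to I b T4 = has (fun c => all (fun l => lit_val I l == T4) c) b.
Proof.
apply/equiv_toP/idP => [h|].
  have := h _ (Oext_le I) => E.
  have : (eval_body (Oext I) b).2 = false by rewrite E.
  rewrite eval_body2 => /negbT; rewrite -has_predC => /hasP [c cb Hc].
  apply/hasP; exists c => //; apply/allP => l lc.
  move: Hc; rewrite /= eval_conj2 -all_predC => /allP /(_ l lc) /=.
  by rewrite lit_val_Oext; case: (lit_val I l) => [[] []].
move=> /hasP [c cb /allP Hc] J HJ.
have Hc' : forall l, l \in c -> lit_val J l = T4.
  move=> l lc; have /eqP E := Hc l lc; rewrite (lit_val_le HJ) //.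
  by rewrite -lit_val_nU E.
case E: (eval_body J b) => [x y].
have : x = true.
  rewrite -[x]/((x, y).1) -E eval_body1; apply/hasP; exists c => //.
  by rewrite eval_conj1; apply/allP => l lc; rewrite Hc'.
have : y = false.
  rewrite -[y]/((x, y).2) -E eval_body2; apply/negbTE; rewrite -has_predC.
  apply/hasP; exists c => //=; rewrite eval_conj2 -all_predC; apply/allP => l lc.
  by rewrite /= Hc'.
by move=> -> ->.
Qed.

Lemma equiv_F I b :
  equiv_to I b F4 = all (fun c => has (fun l => lit_val I l == F4) c) b.
Proof.
apply/equiv_toP/idP => [h|].
  have := h _ (Oext_le I) => E.
  have : (eval_body (Oext I) b).1 = false by rewrite E.
  rewrite eval_body1 => /negbT; rewrite -all_predC => /allP Hb.
  apply/allP => c cb; have := Hb c cb; rewrite /= eval_conj1 -has_predC => /hasP [l lc].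
  rewrite /= lit_val_Oext => H; apply/hasP; exists l => //.
  by move: H; case: (lit_val I l) => [[] []].
move=> /allP Hb J HJ.
have Hc' : forall c, c \in b -> exists2 l, l \in c & lit_val J l = F4.
  move=> c cb; have /hasP [l lc /eqP E] := Hb c cb; exists l => //.
  by rewrite (lit_val_le HJ) // -lit_val_nU E.
case E: (eval_body J b) => [x y].
have : x = false.
  rewrite -[x]/((x, y).1) -E eval_body1; apply/negbTE; rewrite -all_predC.
  apply/allP => c cb /=; have [l lc El] := Hc' c cb.
  rewrite eval_conj1 -has_predC; apply/hasP; exists l => //=; by rewrite El.
have : y = true.
  rewrite -[y]/((x, y).2) -E eval_body2; apply/allP => c cb.
  have [l lc El] := Hc' c cb; rewrite eval_conj2; apply/hasP; exists l => //; by rewrite El.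
by move=> -> ->.
Qed.

Definition three_v (x : four) := x != O4.

Definition Text I : interp A := [ffun a => if I a == U4 then T4 else I a].

Lemma equiv_O I b : three_valued I -> equiv_to I b O4 = false.
Proof.
move=> /forallP h3; apply/negbTE/negP => /equiv_toP h.
have HT : leI I (Text I) by apply/forallP => a; rewrite ffunE; case: (I a) => [[] []].
have E := h _ HT.
have Hl : forall l, (lit_val (Text I) l).1 = ~~ (lit_val (Text I) l).2.
  move=> l; rewrite /lit_val ffunE; move: (h3 l.1).
  by case: l.2; case: (I l.1) => [[] []].
have Hc : forall c, (eval_conj (Text I) c).1 = ~~ (eval_conj (Text I) c).2.
  by move=> c; elim: c => //= l c; rewrite /and4 /= Hl => ->; rewrite negb_or.
have : (eval_body (Text I) b).1 = ~~ (eval_body (Text I) b).2.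
  by clear h E; elim: b => //= c b; rewrite /or4 /= Hc => ->; rewrite negb_and.
by rewrite E.
Qed.

End Ev.

Lemma compat_step4 t s : compat4 t s ==> compat4 (oplus4 t s) s.
Proof. by case: t => [[] []]; case: s => [[] []]. Qed.

Section Seq.
Variable A : finType.
Implicit Types I J G X Y S : interp A.
Variable P : prog4 A.
Local Notation R := (rules P).
Variable H : interp A.

Definition TRval I b := if equiv_to I b T4 then T4 else if equiv_to I b F4 then F4
  else if equiv_to I b O4 then O4 else U4.
Lemma TRE I a : TR R I a = if R a is Some b then TRval I b else U4.
Proof. by rewrite ffunE. Qed.
Lemma equiv_unique I b x y : equiv_to I b x -> equiv_to I b y -> x = y.
Proof. by move=> /equiv_toP h1 /equiv_toP h2; rewrite -(h1 I (leI_refl I)) (h2 I (leI_refl I)). Qed.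
Lemma TRval_eq I b x : equiv_to I b x -> TRval I b = x.
Proof.
move=> h; have U y : equiv_to I b y = (y == x).
  by apply/idP/eqP => [/(equiv_unique h) ->|->].
by rewrite /TRval !U; case: x {h U} => [[] []].
Qed.
Lemma TRval_spec I b : TRval I b != U4 -> equiv_to I b (TRval I b).
Proof.
rewrite /TRval; case: ifP => [->//|_]; case: ifP => [->//|_]; case: ifP => [->//|_].
by rewrite eqxx.
Qed.
Lemma equiv_mono I J b x : leI I J -> equiv_to I b x -> equiv_to J b x.
Proof. by move=> hIJ /equiv_toP h; apply/equiv_toP => K hK; apply: h; exact: leI_trans hK. Qed.
Lemma TR_mono I J : leI I J -> leI (TR R I) (TR R J).
Proof.
move=> hIJ; apply/forallP => a; rewrite !TRE; case: (R a) => [b|] //; apply/implyP => h.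
by rewrite (TRval_eq (equiv_mono hIJ (TRval_spec h))).
Qed.
Lemma TR_T I a : (TR R I a == T4) = (if R a is Some b then equiv_to I b T4 else false).
Proof.
rewrite TRE; case: (R a) => // b; rewrite /TRval; case: ifP => // _.
by case: ifP => // _; case: ifP.
Qed.
Lemma TR_F I a : (TR R I a == F4) = (if R a is Some b then equiv_to I b F4 else false).
Proof.
rewrite TRE; case: (R a) => // b; case: (boolP (equiv_to I b F4)) => h.
  by rewrite (TRval_eq h).
apply/negbTE; rewrite /TRval (negbTE h); case: ifP => //; by case: ifP.
Qed.

Definition supp G : interp A := [ffun a =>
  if [exists S : interp A, [&& sound G R S, leI S H & S a != U4]] then H a else U4].

Lemma supp_max G S : sound G R S -> leI S H -> leI S (supp G).
Proof.
move=> hs hh; apply/forallP => a; apply/implyP => Ha; rewrite ffunE.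
have -> : [exists S0 : interp A, [&& sound G R S0, leI S0 H & S0 a != U4]].
  by apply/existsP; exists S; rewrite hs hh Ha.
by rewrite (leIE hh Ha).
Qed.

Lemma suppH G : leI (supp G) H.
Proof.
apply/forallP => a; rewrite ffunE; case: ifP => _; first by rewrite eqxx implybT.
by rewrite eqxx.
Qed.

Lemma supp_compat G : compatible G (supp G).
Proof.
apply/forallP => a; rewrite ffunE; case: existsP => [[S /and3P [hs hh hSa]]|_]; last first.
  by rewrite eqxx /= implybT.
rewrite -(leIE hh hSa); move: hs => /andP [hc _]; exact: (forallP hc a).
Qed.

Lemma supp_sound G : sound G R (supp G).
Proof.
rewrite /sound supp_compat /=; apply/forallP => a; rewrite /restrict_head ffunE.
case hd: (is_head R a); last by rewrite eqxx.
apply/implyP; rewrite ffunE; case: existsP => [[S /and3P [hs hh hSa]] _|]; last by rewrite eqxx.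
have hsa := leIE hh hSa.
have hsl : leI S (supp G) := supp_max hs hh.
move: (hs) => /andP [hcS hl].
have hS : restrict_head R S a != U4 by rewrite ffunE hd.
have := leIE hl hS; rewrite ffunE hd => e.
have hm : leI (oplusI G S) (oplusI G (supp G)) by apply: oplus_mono (leI_refl G) hsl (supp_compat G).
have := @leIE _ _ _ a (TR_mono hm); rewrite -e => /(_ hSa) <-.
by rewrite hsa.
Qed.

Lemma supp_is G : is_support G R H (supp G).
Proof. by split; [exact: supp_sound | exact: suppH | move=> S hs hh; exact: supp_max]. Qed.

Lemma support_unique G s : is_support G R H s -> s = supp G.
Proof.
case=> hs hh hm; apply: leI_anti; first exact: supp_max.
exact: hm (supp_sound G) (suppH G).
Qed.

Definition step G := oplusI (TR R G) (supp G).

Lemma compat_TR_supp G : compatible (TR R G) (supp G).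
Proof.
apply/forallP => a; apply/implyP => Ht; apply/implyP => Hs; apply/eqP.
case Ra: (R a) => [b|]; last by move: Ht; rewrite TRE Ra eqxx.
have hd : is_head R a by rewrite /is_head Ra.
have := supp_sound G => /andP [_ hl].
have hr : restrict_head R (supp G) a != U4 by rewrite ffunE hd.
have := leIE hl hr; rewrite ffunE hd => ->.
apply: leIE Ht; apply: TR_mono; apply: leI_oplus; exact: supp_compat.
Qed.

Lemma step_mono G : leI G (step G) -> leI (step G) (step (step G)).
Proof.
move=> h; set G' := step G.
have hTR := TR_mono h.
have hc : compatible G' (supp G).
  apply/forallP => a; rewrite ffunE.
  exact: (implyP (compat_step4 _ _)) (forallP (compat_TR_supp G) a).
have hs : leI (supp G) (supp G').
  apply: supp_max; last exact: suppH.
  rewrite /sound hc /=; apply: leI_trans (proj2 (andP (supp_sound G))) _.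
  apply: TR_mono; exact: oplus_mono h (leI_refl _) hc.
exact: oplus_mono hTR hs (compat_TR_supp G').
Qed.

Definition seqf n := iter n step (facts P).

Lemma Hseq_eq f : H_sequence P H f -> forall n, f n = seqf n.
Proof.
case=> h0 hs; elim=> [|n IH] //=; have [s [hsup ->]] := hs n.
by rewrite (support_unique hsup) IH.
Qed.

Lemma Hseq_seqf : H_sequence P H seqf.
Proof. split => // n; exists (supp (seqf n)); split => //; exact: supp_is. Qed.

Hypothesis hF : leI (facts P) (step (facts P)).

Lemma chain n : leI (seqf n) (seqf n.+1).
Proof. elim: n => [|n IH]; first exact: hF. exact: (step_mono IH). Qed.

Definition cnt I := #|[pred a | I a != U4]|.
Lemma cnt_le I J : leI I J -> cnt I <= cnt J.
Proof.
move=> h; apply: subset_leq_card; apply/subsetP => a; rewrite !inE => Ha.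
by rewrite -(leIE h Ha).
Qed.
Lemma cnt_eq I J : leI I J -> cnt I = cnt J -> I = J.
Proof.
move=> h e; have h' := h; apply: leI_anti h' _; apply/forallP => a; apply/implyP => Ha.
have sub : [pred a | I a != U4] \subset [pred a | J a != U4].
  by apply/subsetP => x; rewrite !inE => Hx; rewrite -(leIE h Hx).
move/(subset_cardP e): sub => eqi.
have := eqi a; rewrite !inE Ha => HIa.
by rewrite (leIE h HIa).
Qed.

Lemma stab : exists N, forall m, N <= m -> seqf m = seqf N.
Proof.
have key n : (exists2 k, k <= n & seqf k = seqf k.+1) \/ n <= cnt (seqf n).
  elim: n => [|n [[k kn e]|IH]]; [by right | left; exists k; [exact: leqW kn | exact: e] |].
  case: (eqVneq (seqf n) (seqf n.+1)) => [e|ne]; first by left; exists n; [exact: leqnSn | exact: e].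
  right; have := cnt_le (chain n); rewrite leq_eqVlt => /orP [/eqP e|lt].
    by rewrite (cnt_eq (chain n) e) eqxx in ne.
  exact: leq_ltn_trans IH lt.
have [[k _ e]|c] := key #|A|.+1; last first.
  by move: (leq_trans c (max_card _)); rewrite ltnn.
exists k => m km; rewrite -(subnK km); elim: (m - k) => [|d IH]; first by rewrite add0n.
rewrite addSn /seqf iterS -/(seqf (d + k)) IH; exact: (esym e).
Qed.

Lemma chain_le n k : leI (seqf n) (seqf (k + n)).
Proof.
elim: k => [|k IH]; first exact: leI_refl.
exact: leI_trans IH (chain _).
Qed.

Lemma Hsem_char : exists N, (forall n, leI (seqf n) (seqf N)) /\ seqf N.+1 = seqf N /\
  forall M, Hfounded_sem P H M <-> M = seqf N.
Proof.
have [N hN] := stab; exists N; split; [|split].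
- move=> n; rewrite -(hN (N + n)) ?leq_addr //; exact: chain_le.
- exact: hN.
move=> M; split.
  case=> f [hf [n hn]]; rewrite -(hn (maxn n N)) ?leq_maxl // (Hseq_eq hf).
  exact: hN (leq_maxr _ _).
move=> ->; exists seqf; split; first exact: Hseq_seqf.
by exists N.
Qed.

End Seq.

Lemma brute_step t s : t != O4 -> (s == U4) || (s == F4) -> compat4 t s ->
  [&& oplus4 t s != O4, (oplus4 t s == T4) == (t == T4) &
      (oplus4 t s == F4) == ((t == F4) || (s == F4))].
Proof. by case: t => [[] []]; case: s => [[] []]. Qed.

Lemma brute_lit (b : bool) g s t : g != O4 -> (s == U4) || (s == F4) -> compat4 g s ->
  compat4 t s -> ((if b then oplus4 g s else neg4 (oplus4 g s)) == F4) ->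
  (g == if ~~ b then T4 else F4) || (b && (oplus4 t s == F4)).
Proof. by case: b; case: g => [[] []]; case: s => [[] []]; case: t => [[] []]. Qed.

Lemma brute_S (b u : bool) m : m != O4 -> (u -> m != T4) ->
  (((if b then m else neg4 m) == F4) || (b && u)) ->
  (if b then oplus4 m (if u && (m != T4) then F4 else U4)
   else neg4 (oplus4 m (if u && (m != T4) then F4 else U4))) == F4.
Proof. by case: b; case: u; case: m => [[] []]. Qed.

Lemma brute_eq x y : [&& x != O4, y != O4, (x == T4) == (y == T4) & (x == F4) == (y == F4)] ==> (x == y).
Proof. by case: x => [[] []]; case: y => [[] []]. Qed.

Section Spec.
Variable A : finType.
Implicit Types I J G X Y S M : interp A.
Variable P : dprog A.
Local Notation Q := (to_four P).
Local Notation R := (rules (to_four P)).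

Lemma has_bodies p a : has p (bodies_of P a) = has (fun r => (r.1 == a) && p r.2) P.
Proof. rewrite /bodies_of; elim: P => //= r s IH; by case: (r.1 == a) => /=; rewrite IH. Qed.
Lemma all_bodies p a : all p (bodies_of P a) = all (fun r => (r.1 != a) || p r.2) P.
Proof. rewrite /bodies_of; elim: P => //= r s IH; by case: (r.1 == a) => /=; rewrite IH. Qed.

Lemma TR_T4 I a : (TR R I a == T4) = has (fun c => all (fun l => lit_val I l == T4) c) (bodies_of P a).
Proof. rewrite TR_T /=; case: (bodies_of P a) => [|c cs] //; exact: equiv_T. Qed.
Lemma TR_F4 I a : (TR R I a == F4) =
  (bodies_of P a != [::]) && all (fun c => has (fun l => lit_val I l == F4) c) (bodies_of P a).
Proof. rewrite TR_F /=; case: (bodies_of P a) => [|c cs] //; exact: equiv_F. Qed.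
Lemma TR_nO I a : three_valued I -> TR R I a != O4.
Proof.
move=> h3; rewrite TRE /=; case: (bodies_of P a) => [|c cs] //.
rewrite /TRval (equiv_O (c :: cs) h3); by case: ifP => //; case: ifP.
Qed.
Lemma is_headE a : is_head R a = (bodies_of P a != [::]).
Proof. by rewrite /is_head /=; case: (bodies_of P a). Qed.

Lemma mem_lits I l : (l \in lits_of I) = (lit_val I l == T4).
Proof. by rewrite inE /lit_val; case: l => x [] //=; case: (I x) => [[] []]. Qed.
Lemma mem_lits_neg I l : ((l.1, ~~ l.2) \in lits_of I) = (lit_val I l == F4).
Proof. by rewrite inE /lit_val; case: l => x [] //=; case: (I x) => [[] []]. Qed.

Lemma leI_lits I J : leI I J -> {subset lits_of I <= lits_of J}.
Proof.
move=> h [x b]; rewrite !inE /= => hx.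
have hn : I x != U4 by move: hx; case: b; case: (I x) => [[] []].
by rewrite -(leIE h hn).
Qed.

Lemma lits_U l : (l \in lits_of (const_interp U4 : interp A)) = false.
Proof. by rewrite inE ffunE; case: l.2. Qed.

Lemma three_nO I x : three_valued I -> I x != O4.
Proof. by move=> /forallP. Qed.

Local Notation HF := (const_interp F4 : interp A).
Local Notation stF := (step Q HF).

Lemma suppF G a : (supp Q HF G a == U4) || (supp Q HF G a == F4).
Proof. by rewrite ffunE; case: ifP; rewrite ?ffunE. Qed.

Lemma stF_all G a : three_valued G -> [&& stF G a != O4, (stF G a == T4) == (TR R G a == T4) &
      (stF G a == F4) == ((TR R G a == F4) || (supp Q HF G a == F4))].
Proof.
move=> h3; rewrite ffunE; apply: brute_step; [exact: TR_nO | exact: suppF |].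
exact: (forallP (compat_TR_supp Q HF G) a).
Qed.

Lemma stF_three G : three_valued G -> three_valued (stF G).
Proof. by move=> h3; apply/forallP => a; case/and3P: (stF_all a h3). Qed.
Lemma stF_T G a : three_valued G -> (stF G a == T4) = (TR R G a == T4).
Proof. by move=> h3; case/and3P: (stF_all a h3) => _ /eqP. Qed.
Lemma stF_F G a : three_valued G -> (stF G a == F4) = ((TR R G a == F4) || (supp Q HF G a == F4)).
Proof. by move=> h3; case/and3P: (stF_all a h3) => _ _ /eqP. Qed.

Lemma UF G (J : {set lit A}) : three_valued G -> {subset lits_of G <= J} ->
  unfounded P J [set x | stF G x == F4].
Proof.
move=> h3 hJ; apply/forallP => x; apply/implyP; rewrite inE (stF_F _ h3) => hx.
rewrite -all_bodies; apply/allP => c cb.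
case/orP: hx => [hT|hS].
  move: hT; rewrite TR_F4 => /andP [_ /allP /(_ c cb)].
  apply: sub_has => l hl; apply/orP; left; apply: hJ; by rewrite mem_lits_neg.
have hd : is_head R x by rewrite is_headE; apply/eqP => e; rewrite e in cb.
have := supp_sound Q HF G => /andP [hc hl].
have hr : restrict_head R (supp Q HF G) x != U4 by rewrite ffunE hd; move/eqP: hS => ->.
have := leIE hl hr; rewrite ffunE hd (eqP hS) => /esym/eqP.
rewrite TR_F4 => /andP [_ /allP /(_ c cb)].
apply: sub_has => l; rewrite /lit_val ffunE => hlv.
have := brute_lit (three_nO l.1 h3) (suppF G l.1) (forallP hc l.1)
   (forallP (compat_TR_supp Q HF G) l.1) hlv.
case/orP => [hg|/andP [hb ht]].
  apply/orP; left; apply: hJ; rewrite inE /=; exact: hg.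
apply/orP; right; rewrite hb inE ffunE; exact: ht.
Qed.

Lemma hF0 H : leI (facts Q) (step Q H (facts Q)).
Proof. by apply/forallP => a; rewrite /= ffunE eqxx. Qed.

Lemma seqF_three n : three_valued (seqf Q HF n).
Proof.
elim: n => [|n IH]; first by apply/forallP => a; rewrite /= ffunE.
rewrite /seqf iterS; exact: stF_three.
Qed.

Lemma part1 : (exists M, Hfounded_sem Q HF M) /\
   forall M : interp A, Hfounded_sem Q HF M <-> three_valued M /\ is_wfs P (lits_of M).
Proof.
have [N [hle [hfix hsem]]] := Hsem_char (hF0 HF).
set M := seqf Q HF N in hle hfix hsem.
have h3 : three_valued M by exact: seqF_three.
have fixM : stF M = M by rewrite -[RHS]hfix /M /seqf iterS.
have Disj : forall U, unfounded P (lits_of M) U -> forall x, M x == T4 -> x \notin U.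
  move=> U hU.
  suff: forall n x, seqf Q HF n x == T4 -> x \notin U by apply.
  elim=> [|n IH] x; first by rewrite /= ffunE.
  rewrite /seqf iterS -/(seqf Q HF n) (stF_T _ (seqF_three n)) TR_T4 => /hasP [c cb /allP hc].
  apply/negP => xU; move: (forallP hU x); rewrite xU /= -all_bodies => /allP /(_ c cb).
  case/hasP => l lc /orP [hn|/andP [hb hlU]].
    have : l \in lits_of M by apply: (leI_lits (hle n)); rewrite mem_lits; exact: hc.
    by rewrite mem_lits; move: hn; rewrite mem_lits_neg => /eqP ->.
  have hT : seqf Q HF n l.1 == T4 by move: (hc l lc); rewrite /lit_val hb.
  by move: (IH l.1 hT); rewrite hlU.
have wfsM : is_wfs P (lits_of M).
  split.
    apply/setP => [[x b]]; rewrite !inE /=; case: b.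
      rewrite -has_bodies; transitivity (stF M x == T4); last by rewrite fixM.
      rewrite (stF_T _ h3) TR_T4.
      by apply: eq_has => c; apply: eq_all => l; rewrite mem_lits.
    apply/idP/idP.
      case/bigcupP => U hU xU.
      have hxT : M x != T4 by apply/negP => /(Disj U hU x); rewrite xU.
      pose S : interp A := [ffun y => if (y \in U) && (M y != T4) then F4 else U4].
      have hS : sound M R S.
        apply/andP; split.
          apply/forallP => y; rewrite ffunE; move: (three_nO y h3).
          by case: (y \in U); case: (M y) => [[] []].
        apply/forallP => y; rewrite ffunE; case hd: (is_head R y); last by rewrite eqxx.
        rewrite ffunE; case: ifP => [/andP [yU hT]|_]; last by rewrite eqxx.
        rewrite (_ : (F4 != U4) = true) // implyTb.
        rewrite eq_sym TR_F4 -is_headE hd /=; apply/allP => c cb.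
        move: (forallP hU y); rewrite yU /= -all_bodies => /allP /(_ c cb).
        apply: sub_has => l hl; rewrite /lit_val !ffunE.
        apply: brute_S; first exact: three_nO.
          by move=> hu; apply/negP => /(Disj U hU l.1); rewrite hu.
        by rewrite -mem_lits_neg.
      have hSH : leI S HF by apply/forallP => y; rewrite !ffunE; case: ifP.
      have := @leIE _ _ _ x (supp_max hS hSH); rewrite ffunE xU hxT => /(_ isT) hs.
      by rewrite -{1}fixM (stF_F _ h3) -hs orbT.
    move=> hx; apply/bigcupP; exists [set y | stF M y == F4].
      by apply: UF.
    by rewrite inE fixM.
  move=> J hJ; apply/subsetP.
  suff: forall n, {subset lits_of (seqf Q HF n) <= J} by apply.
  elim=> [|n IH] [x b]; first by rewrite lits_U.
  suff: (x, b) \in lits_of (stF (seqf Q HF n)) -> (x, b) \in WP P J by rewrite hJ.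
  rewrite !inE /=; case: b.
    rewrite (stF_T _ (seqF_three n)) TR_T4 has_bodies.
    apply: sub_has => r /andP [-> /allP hr]; apply/allP => l lr; apply: IH.
    by rewrite mem_lits; exact: hr.
  move=> hx; apply/bigcupP; exists [set y | stF (seqf Q HF n) y == F4].
    by apply: UF; [exact: seqF_three | exact: IH].
  by rewrite inE.
split; first by exists M; apply/hsem.
move=> M'; split; first by move/hsem ->.
move=> hh; apply/hsem; move: hh.
case=> h3' [hW' hl'].
have e1 := hl' _ (proj1 wfsM); have e2 := (proj2 wfsM) _ hW'.
apply/ffunP => x.
have t1 := subsetP e1 (x, true); have t2 := subsetP e2 (x, true).
have f1 := subsetP e1 (x, false); have f2 := subsetP e2 (x, false).
move: t1 t2 f1 f2; rewrite !inE /= => t1 t2 f1 f2.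
apply/eqP; apply: (implyP (brute_eq (M' x) (M x))).
rewrite (three_nO x h3) (three_nO x h3') /=; apply/andP; split.
  by apply/eqP; apply/idP/idP; [exact: t1 | exact: t2].
by apply/eqP; apply/idP/idP; [exact: f1 | exact: f2].
Qed.

End Spec.

Lemma b_kle x y : lek4 x y ==> (y != O4) ==> le4 x y.
Proof. by case: x => [[] []]; case: y => [[] []]. Qed.
Lemma b_lek x y : le4 x y ==> lek4 x y.
Proof. by case: x => [[] []]; case: y => [[] []]. Qed.
Lemma b_anti x y : lek4 x y ==> lek4 y x ==> (x == y).
Proof. by case: x => [[] []]; case: y => [[] []]. Qed.

Section Spec2.
Variable A : finType.
Implicit Types I J G X Y S M : interp A.
Variable P : dprog A.
Local Notation Q := (to_four P).
Local Notation R := (rules (to_four P)).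
Local Notation HU := (const_interp U4 : interp A).

Lemma stU G : step Q HU G = TR R G.
Proof.
apply/ffunP => a; rewrite ffunE.
have -> : supp Q HU G a = U4 by rewrite ffunE; case: ifP => _; rewrite ?ffunE.
by case: (TR R G a) => [[] []].
Qed.

Lemma eval_conj_T I c : (eval_conj I c == T4) = all (fun l => lit_val I l == T4) c.
Proof.
elim: c => // l c /= <-.
by case: (lit_val I l) => [[] []]; case: (eval_conj I c) => [[] []].
Qed.
Lemma lit_nO I l : three_valued I -> lit_val I l != O4.
Proof. move=> h; rewrite /lit_val; move: (three_nO l.1 h); by case: l.2; case: (I l.1) => [[] []]. Qed.
Lemma conj_nO I c : three_valued I -> eval_conj I c != O4.
Proof.
move=> h; elim: c => // l c /=; move: (lit_nO l h).
by case: (lit_val I l) => [[] []]; case: (eval_conj I c) => [[] []].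
Qed.
Lemma eval_conj_F I c : three_valued I ->
  (eval_conj I c == F4) = has (fun l => lit_val I l == F4) c.
Proof.
move=> h; elim: c => // l c /= <-; move: (lit_nO l h) (conj_nO c h).
by case: (lit_val I l) => [[] []]; case: (eval_conj I c) => [[] []].
Qed.

Lemma TR_Phi G : three_valued G -> TR R G = Phi P G.
Proof.
move=> h3; apply/ffunP => a; rewrite TRE /Phi ffunE /=.
case: (bodies_of P a) => [|c cs] //.
have e1 : has (fun c0 => eval_conj G c0 == T4) (c :: cs) =
          has (fun c0 => all (fun l => lit_val G l == T4) c0) (c :: cs).
  by apply: eq_has => c0; rewrite eval_conj_T.
have e2 : all (fun c0 => eval_conj G c0 == F4) (c :: cs) =
          all (fun c0 => has (fun l => lit_val G l == F4) c0) (c :: cs).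
  by apply: eq_all => c0; rewrite eval_conj_F.
rewrite /TRval equiv_T equiv_F (equiv_O (c :: cs) h3) e1 e2.
by case: ifP => //; case: ifP.
Qed.

Lemma TR_three G : three_valued G -> three_valued (TR R G).
Proof. by move=> h; apply/forallP => a; apply: TR_nO. Qed.

Lemma seqU_three n : three_valued (seqf Q HU n).
Proof.
elim: n => [|n IH]; first by apply/forallP => a; rewrite /= ffunE.
rewrite /seqf iterS stU; exact: TR_three.
Qed.

Lemma part2 : (exists M, Hfounded_sem Q HU M) /\
   forall M : interp A, Hfounded_sem Q HU M <-> is_kk P M.
Proof.
have [N [hle [hfix hsem]]] := Hsem_char (hF0 P HU).
set M := seqf Q HU N in hle hfix hsem.
have h3 : three_valued M by exact: seqU_three.
have fixM : TR R M = M by rewrite -[RHS]hfix /M /seqf iterS stU.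
have kkM : is_kk P M.
  split => //; first by rewrite -TR_Phi.
  move=> N' h3' hfix'.
  suff: forall n, leKI (seqf Q HU n) N' by apply.
  elim=> [|n IH]; first by apply/forallP => a; rewrite /= ffunE.
  rewrite /seqf iterS stU -/(seqf Q HU n).
  have hl : leI (seqf Q HU n) N'.
    by apply/forallP => a; apply: (implyP (implyP (b_kle _ _) (forallP IH a))); exact: three_nO.
  have := @TR_mono _ Q _ _ hl; rewrite (TR_Phi h3') hfix' => hl2.
  by apply/forallP => a; apply: (implyP (b_lek _ _)); exact: (forallP hl2 a).
split; first by exists M; apply/hsem.
move=> M'; split; first by move/hsem ->.
move=> [h3' hfix' hl']; apply/hsem.
case: kkM => _ _ hlM.
have e1 := hlM M' h3' hfix'; have phM : Phi P M = M by rewrite -(TR_Phi h3).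
have e2 := hl' M h3 phM.
apply/ffunP => x; apply/eqP.
exact: (implyP (implyP (b_anti _ _) (forallP e2 x)) (forallP e1 x)).
Qed.
End Spec2.

Unset Implicit Arguments.
Theorem theorem2 (A : finType) (P : dprog A) :
  ((exists M, Hfounded_sem (to_four P) (const_interp F4) M) /\
   forall M : interp A, Hfounded_sem (to_four P) (const_interp F4) M <->
                        three_valued M /\ is_wfs P (lits_of M)) /\
  ((exists M, Hfounded_sem (to_four P) (const_interp U4) M) /\
   forall M : interp A, Hfounded_sem (to_four P) (const_interp U4) M <-> is_kk P M).
Proof. split; [exact: (part1 P) | exact: (part2 P)]. Qed.
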